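(* Let $M$ be a maximal set of colored hypergraphs that are degree-irreducible and degree-reducibly independent. Then $M$ is also a maximal set of hypergraphs that are irreducible and reducibly independent.
   Context: Fix $n\ge2$, $V=\mathbb{C}^n$ with standard basis $e_1,\dots,e_n$ and ${\rm SL}_n$ acting by left multiplication, integers $n_1,\dots,n_{n-1}\ge0$, and $W=\bigoplus_{i=1}^{n-1}(\bigwedge^iV)^{n_i}$; write the component of $t\in W$ in the $j$-th copy of $\bigwedge^iV$ as $t_{i,j}=\sum_{a_1<\dots<a_i}t_{i,j}^{a_1\cdots a_i}e_{a_1}\wedge\dots\wedge e_{a_i}$, extended to all index tuples by total antisymmetry. A colored hypergraph $\Gamma$ consists of an ordered finite vertex set and a finite family of hyperedges; each hyperedge has a size $i\in\{1,\dots,n-1\}$, a color $j\in\{1,\dots,n_i\}$ and is a multiset of $i$ vertices (its connections; it is looping if all connections are at one vertex); every vertex has exactly $n$ connections in total. The invariant $f_\Gamma\in\mathbb{C}[W]^{{\rm SL}_n}$ is the complete contraction obtained by taking one Levi-Civita symbol $\varepsilon_{a_1\cdots a_n}$ per vertex and one copy of the components of $t_{i,j}$ per hyperedge of size $i$ and color $j$, and contracting each of the $i$ indices of a hyperedge with an index slot of the vertex at which the corresponding connection sits (each slot used once); $f_\Gamma$ is determined by $\Gamma$ up to sign (a fixed sign convention is chosen), and $f$ is extended linearly to linear combinations of hypergraphs (graphsums). $\Gamma$ is disconnected if its vertices split into two nonempty classes with no hyperedge connecting both. A graphsum $\Upsilon$ is reducible if $f_\Upsilon=0$ or $f_\Upsilon=\sum_i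 a_if_{\Gamma_i}$ with all $\Gamma_i$ disconnected, and irreducible otherwise; graphsums are reducibly independent if only the trivial linear combination of them is reducible, and $\Upsilon_1\simeq_r\Upsilon_2$ means $\Upsilon_1-\Upsilon_2$ is reducible. The virtual degree of a vertex $v$ is $n$ minus the total number of connections at $v$ of looping hyperedges at $v$. The virtual degree type $d(\Gamma)$ of a hypergraph with $k$ vertices is the non-increasing sequence $(d_1,\dots,d_k)$ of virtual degrees of its vertices; for hypergraphs with the same number $k$ of vertices set $\Gamma<\Gamma'$ iff $d_1\le d_1',\dots,d_{k-1}\le d'_{k-1}$ and $d_k<d'_k$. A graphsum $\sum\Gamma_i$ is degree-reducible if it is $\simeq_r$ to $0$ or to a graphsum $\sum\Gamma'_j$ with $d(\Gamma'_j)<d(\Gamma_i)$ for all $i,j$; degree-irreducible otherwise. Graphsums $\Upsilon_1,\dots,\Upsilon_N$ are degree-reducibly independent if $\sum a_i\Upsilon_i$ is degree-reducible only when all $a_i=0$. *)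

(* Defs.v *)
(* C is modelled by algC (algebraic complex numbers, an
   algebraically closed field of characteristic 0); polynomial invariants
   are represented as the functions W -> algC they define. *)
From HB Require Import structures.
From mathcomp Require Import all_boot all_order all_algebra all_field.
Set Implicit Arguments. Unset Strict Implicit. Unset Printing Implicit Defensive.
Import Order.TTheory GRing.Theory Num.Theory.

(* A hyperedge: (size i, color j, list of the i vertices of its connections). *)
Definition edge := (nat * nat * seq nat)%type.
Definition e_size (e : edge) : nat := e.1.1.
Definition e_col (e : edge) : nat := e.1.2.
Definition e_vs (e : edge) : seq nat := e.2.

(* A colored hypergraph: (number k of vertices 0..k-1, list of hyperedges). *)
Definition hgraph := (nat * seq edge)%type.
Definition hg_k (g : hgraph) : nat := g.1.
Definition hg_edges (g : hgraph) : seq edge := g.2.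

(* Well-formedness for fixed n and multiplicities ns i = n_i. *)
Definition edge_ok (n : nat) (ns : nat -> nat) (k : nat) (e : edge) : bool :=
  [&& 1 <= e_size e <= n.-1, 1 <= e_col e <= ns (e_size e),
      size (e_vs e) == e_size e & all (fun v => v < k) (e_vs e)].

Definition conns (g : hgraph) : seq nat := flatten (map e_vs (hg_edges g)).

Definition valid (n : nat) (ns : nat -> nat) (g : hgraph) : Prop :=
  0 < hg_k g /\ all (edge_ok n ns (hg_k g)) (hg_edges g) /\
  forall v, v < hg_k g -> count_mem v (conns g) = n.

(* A point of W: t i j S is the coordinate of e_{a_1}/\.../\e_{a_i}
   (a_1<...<a_i the elements of S) in the j-th copy of /\^i V. *)
Definition Wpt (n : nat) := nat -> nat -> {set 'I_n} -> algC.

Definition inversions (s : seq nat) : nat :=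
  \sum_(p < size s) \sum_(q < size s) ((p < q) && (nth 0 s q < nth 0 s p)).

Definition alt_sign (s : seq nat) : algC :=
  (if uniq s then (-1) ^+ inversions s else 0)%R.

(* antisymmetric extension of the components of t_{i,j} *)
Definition comp (n : nat) (t : Wpt n) (i j : nat) (s : seq nat) : algC :=
  (alt_sign s * t i j [set x : 'I_n | val x \in s])%R.

(* f_Gamma: complete contraction; each vertex carries a Levi-Civita symbol
   whose slots receive the indices of its connections in list order. *)
Definition f_hg (n : nat) (g : hgraph) (t : Wpt n) : algC :=
  (\sum_(sg : (size (conns g)).-tuple 'I_n)
    let s := map val sg in
    (\prod_(v < hg_k g) alt_sign [seq x.2 | x <- zip (conns g) s & x.1 == val v])
    * \prod_(p <- zip (hg_edges g) (reshape (map size (map e_vs (hg_edges g))) s))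
        comp t (e_size p.1) (e_col p.1) p.2)%R.

Definition graphsum := seq (algC * hgraph).
Definition f_gs (n : nat) (U : graphsum) (t : Wpt n) : algC :=
  (\sum_(p <- U) p.1 * f_hg p.2 t)%R.
Definition gs_valid n ns (U : graphsum) : Prop := forall p, p \in U -> valid n ns p.2.
Definition gs_sub (U1 U2 : graphsum) : graphsum :=
  U1 ++ [seq ((- p.1)%R, p.2) | p <- U2].

Definition disconnected (g : hgraph) : Prop :=
  exists S : nat -> bool,
    (exists v, v < hg_k g /\ S v) /\ (exists v, v < hg_k g /\ ~~ S v) /\
    forall e, e \in hg_edges g -> all S (e_vs e) || all (fun v => ~~ S v) (e_vs e).

Definition reducible n ns (U : graphsum) : Prop :=
  (forall t : Wpt n, f_gs U t = 0%R) \/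
  exists U' : graphsum, gs_valid n ns U' /\
    (forall p, p \in U' -> disconnected p.2) /\
    forall t : Wpt n, f_gs U t = f_gs U' t.

Definition red_equiv n ns (U1 U2 : graphsum) : Prop := reducible n ns (gs_sub U1 U2).

Definition irreducible n ns (g : hgraph) : Prop := ~ reducible n ns [:: (1%R, g)].

(* M a set of hypergraphs; only finite combinations of distinct members *)
Definition red_indep n ns (M : hgraph -> Prop) : Prop :=
  forall (U : graphsum), uniq (map snd U) -> (forall p, p \in U -> M p.2) ->
    reducible n ns U -> forall p, p \in U -> p.1 = 0%R.

Definition vdeg (n : nat) (g : hgraph) (v : nat) : nat :=
  n - \sum_(e <- hg_edges g | all (fun w => w == v) (e_vs e)) size (e_vs e).
Definition dtype (n : nat) (g : hgraph) : seq nat :=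
  sort geq [seq vdeg n g v | v <- iota 0 (hg_k g)].

Definition dlt (n : nat) (g g' : hgraph) : Prop :=
  hg_k g = hg_k g' /\ 0 < hg_k g /\
  (forall p, p < (hg_k g).-1 -> nth 0 (dtype n g) p <= nth 0 (dtype n g') p) /\
  nth 0 (dtype n g) (hg_k g).-1 < nth 0 (dtype n g') (hg_k g).-1.

Definition gs_support (U : graphsum) : seq hgraph := [seq p.2 | p <- U & p.1 != 0%R].

Definition deg_reducible n ns (U : graphsum) : Prop :=
  red_equiv n ns U [::] \/
  exists U' : graphsum, gs_valid n ns U' /\ red_equiv n ns U U' /\
    forall g g', g \in gs_support U -> g' \in map snd U' -> dlt n g' g.

Definition deg_irreducible n ns (g : hgraph) : Prop := ~ deg_reducible n ns [:: (1%R, g)].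

Definition deg_red_indep n ns (M : hgraph -> Prop) : Prop :=
  forall (U : graphsum), uniq (map snd U) -> (forall p, p \in U -> M p.2) ->
    deg_reducible n ns U -> forall p, p \in U -> p.1 = 0%R.

Definition P_deg n ns (M : hgraph -> Prop) : Prop :=
  (forall g, M g -> valid n ns g) /\ (forall g, M g -> deg_irreducible n ns g) /\
  deg_red_indep n ns M.

Definition P_red n ns (M : hgraph -> Prop) : Prop :=
  (forall g, M g -> valid n ns g) /\ (forall g, M g -> irreducible n ns g) /\
  red_indep n ns M.

Definition maximal_set (P : (hgraph -> Prop) -> Prop) (M : hgraph -> Prop) : Prop :=
  P M /\ forall M' : hgraph -> Prop, P M' -> (forall g, M g -> M' g) ->
    forall g, M' g -> M g.

(* Main.v *)
Require Import Defs.
From mathcomp Require Import all_boot all_order all_algebra all_field.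
From mathcomp Require Import zify ring.
From Stdlib Require Import Classical.
Set Implicit Arguments. Unset Strict Implicit. Unset Printing Implicit Defensive.
Import Order.TTheory GRing.Theory Num.Theory.
Local Open Scope ring_scope.

Definition spanP n (P : hgraph -> Prop) (F : Wpt n -> algC) : Prop :=
  exists U : graphsum, (forall p, p \in U -> P p.2) /\ forall t, F t = f_gs U t.

Lemma spanP_ext n P (F G : Wpt n -> algC) :
  spanP P F -> (forall t, F t = G t) -> spanP P G.
Proof. move=> [U [HU HF]] E; exists U; split=> // t; by rewrite -E. Qed.

Lemma spanP_0 n P : spanP P (fun _ : Wpt n => 0).
Proof. exists [::]; split=> // t; by rewrite /f_gs big_nil. Qed.

Lemma f_gs_cat n U V (t : Wpt n) : f_gs (U ++ V) t = f_gs U t + f_gs V t.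
Proof. by rewrite /f_gs big_cat. Qed.

Lemma f_gs_sub n U V (t : Wpt n) : f_gs (gs_sub U V) t = f_gs U t - f_gs V t.
Proof.
rewrite /gs_sub f_gs_cat /f_gs big_map -sumrN; congr (_ + _).
by apply: eq_bigr => p _; rewrite mulNr.
Qed.

Lemma spanP_add n P (F G : Wpt n -> algC) :
  spanP P F -> spanP P G -> spanP P (fun t => F t + G t).
Proof.
move=> [U [HU HF]] [V [HV HG]]; exists (U ++ V); split.
  by move=> p; rewrite mem_cat => /orP [] ?; [apply: HU|apply: HV].
by move=> t; rewrite f_gs_cat HF HG.
Qed.

Definition gs_scale (a : algC) (U : graphsum) : graphsum :=
  [seq (a * p.1, p.2) | p <- U].

Lemma f_gs_scale n a U (t : Wpt n) : f_gs (gs_scale a U) t = a * f_gs U t.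
Proof. rewrite /f_gs big_map mulr_sumr; apply: eq_bigr => p _ /=; by rewrite mulrA. Qed.

Lemma spanP_scale n P a (F : Wpt n -> algC) :
  spanP P F -> spanP P (fun t => a * F t).
Proof.
move=> [U [HU HF]]; exists (gs_scale a U); split.
  by move=> p /mapP [q Hq ->] /=; apply: HU.
by move=> t; rewrite f_gs_scale HF.
Qed.

Lemma spanP_hg n (P : hgraph -> Prop) g : P g -> spanP P (@f_hg n g).
Proof.
move=> Hg; exists [:: (1, g)]; split.
  by move=> p; rewrite inE => /eqP ->.
by move=> t; rewrite /f_gs big_seq1 mul1r.
Qed.

Lemma spanP_gs n P (U : graphsum) :
  (forall p, p \in U -> spanP P (@f_hg n p.2)) -> spanP P (@f_gs n U).
Proof.
elim: U => [|q U IH] H.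
  by apply: spanP_ext (spanP_0 _ _) _ => t; rewrite /f_gs big_nil.
apply: spanP_ext (spanP_add (spanP_scale q.1 (H q (mem_head _ _))) (IH _)) _.
  by move=> p Hp; apply: H; rewrite inE Hp orbT.
by move=> t; rewrite /f_gs big_cons.
Qed.

Lemma spanP_mono n (P Q : hgraph -> Prop) (F : Wpt n -> algC) :
  (forall g, P g -> Q g) -> spanP P F -> spanP Q F.
Proof. move=> HPQ [U [HU HF]]; exists U; split=> // p Hp; apply: HPQ; exact: HU. Qed.

Lemma spanP_or n P Q (F : Wpt n -> algC) : spanP (fun h => P h \/ Q h) F ->
  exists G, spanP P G /\ spanP Q (fun t => F t - G t).
Proof.
move=> [U [HU HF]]; elim: U HU F HF => [|q U IH] HU F HF.
  exists (fun _ => 0); split; first exact: spanP_0.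
  by apply: spanP_ext (spanP_0 _ _) _ => t; rewrite HF /f_gs big_nil subr0.
have HU' : forall p, p \in U -> P p.2 \/ Q p.2.
  by move=> p Hp; apply: HU; rewrite inE Hp orbT.
have [G [HG1 HG2]] := IH HU' (f_gs U) (fun t => erefl).
case: (HU q (mem_head _ _)) => Hq.
- exists (fun t => q.1 * f_hg q.2 t + G t); split.
    exact: spanP_add (spanP_scale _ (spanP_hg _ Hq)) HG1.
  apply: spanP_ext HG2 _ => t; rewrite HF /f_gs big_cons; ring.
- exists G; split => //.
  apply: spanP_ext (spanP_add (spanP_scale q.1 (spanP_hg _ Hq)) HG2) _ => t.
  rewrite HF /f_gs big_cons; ring.
Qed.

Lemma red_span n ns U :
  reducible n ns U <-> spanP (fun h => valid n ns h /\ disconnected h) (@f_gs n U).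
Proof.
split.
  case=> [H0 | [U' [HV [HD HF]]]].
    by apply: spanP_ext (spanP_0 _ _) _ => t; rewrite H0.
  by exists U'; split=> // p Hp; split; [apply: HV|apply: HD].
move=> [U' [HU HF]]; right; exists U'; split; last split=> //.
  by move=> p Hp; case: (HU p Hp).
by move=> p Hp; case: (HU p Hp).
Qed.

Lemma reducible_ext n ns U V :
  reducible n ns U -> (forall t : Wpt n, f_gs U t = f_gs V t) -> reducible n ns V.
Proof. by move=> /red_span H E; apply/red_span; apply: spanP_ext H E. Qed.

Lemma deg_red_ext n ns U V :
  deg_reducible n ns U -> (forall t : Wpt n, f_gs U t = f_gs V t) ->
  {subset gs_support V <= gs_support U} -> deg_reducible n ns V.
Proof.
move=> [H|[U' [HV [Hr Hlt]]]] E Hsub.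
  left; apply: reducible_ext H _ => t; by rewrite !f_gs_sub E.
right; exists U'; split=> //; split.
  apply: reducible_ext Hr _ => t; by rewrite !f_gs_sub E.
by move=> g g' Hg Hg'; apply: Hlt => //; apply: Hsub.
Qed.

Definition mu n (g : hgraph) : nat := (\sum_(i < hg_k g) nth 0%N (dtype n g) i)%N.

Lemma dlt_mu n g' g : dlt n g' g -> (mu n g' < mu n g)%N.
Proof.
move=> [Hk [Hk0 [Hle Hlast]]]; rewrite /mu Hk; rewrite Hk in Hk0 Hle Hlast.
move: (hg_k g) Hk0 Hle Hlast => [|k] //= _ Hle Hlast.
rewrite !big_ord_recr /=.
have := @leq_sum _ (index_enum 'I_k) xpredT (fun i : 'I_k => nth 0%N (dtype n g') i)
  (fun i : 'I_k => nth 0%N (dtype n g) i) (fun i _ => Hle i (ltn_ord i)).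
move=> H; rewrite -addnS; exact: leq_add H Hlast.
Qed.

Lemma sum_uniq_snd (U : graphsum) (q : algC * hgraph) (F : algC * hgraph -> algC) :
  uniq (map snd U) -> q \in U -> \sum_(p <- U | p.2 == q.2) F p = F q.
Proof.
elim: U => [//|a U IH] /= /andP [Hna Hu]; rewrite inE big_cons => /orP [/eqP ->|HqU].
  rewrite eqxx big1_seq ?addr0 // => p /andP [/eqP Hpa HpU]; exfalso.
  by apply: (negP Hna); rewrite -Hpa; exact: map_f.
have -> : (a.2 == q.2) = false.
  by apply/negP => /eqP Haq; apply: (negP Hna); rewrite Haq; exact: map_f.
exact: IH.
Qed.

Lemma key n ns M : maximal_set (P_deg n ns) M -> forall g, valid n ns g ->
  spanP (fun h => M h \/ (valid n ns h /\ disconnected h)) (@f_hg n g).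
Proof.
move=> [[HMv [HMi HMind]] Hmax].
set MD := fun h => M h \/ (valid n ns h /\ disconnected h).
suff H : forall m g, (mu n g < m)%N -> valid n ns g -> spanP MD (@f_hg n g).
  by move=> g; apply: (H (mu n g).+1).
elim=> [//|m IH] g Hlt Hv.
case: (classic (M g)) => HMg; first by apply: spanP_hg; left.
pose M'' := fun h => M h \/ h = g.
case: (classic (exists U : graphsum, [/\ uniq (map snd U), (forall p, p \in U -> M'' p.2),
   deg_reducible n ns U & exists2 p, p \in U & p.1 != 0])) => [[U [Hu HU Hd [p0 Hp0 Hp0n]]] | Hno];
   last first.
  exfalso; apply: HMg; apply: (Hmax M''); last by right.
    split; [|split].
    - by move=> h [|->] //; exact: HMv.
    - move=> h Hh Hr; apply: Hno; exists [:: (1, h)]; split=> //.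
        by move=> p; rewrite inE => /eqP ->.
      by exists (1, h); rewrite ?mem_head ?oner_neq0.
    - move=> U Hu HU Hd p Hp; apply/eqP; apply/negPn/negP => Hn; apply: Hno.
      by exists U; split=> //; exists p.
  by move=> h Hh; left.
pose UM := [seq p <- U | p.2 != g].
have HUM : forall p, p \in UM -> M p.2.
  move=> p; rewrite mem_filter => /andP [Hpg HpU]; case: (HU p HpU) => // Heq.
  by rewrite Heq eqxx in Hpg.
pose c := \sum_(p <- U | p.2 == g) p.1.
have Hdec : forall t : Wpt n, f_gs U t = c * f_hg g t + f_gs UM t.
  move=> t; rewrite /f_gs (bigID (fun p : algC * hgraph => p.2 == g)) /= big_filter; congr (_ + _).
  by rewrite /c mulr_suml; apply: eq_bigr => p /eqP ->.
have HsupUM : {subset gs_support UM <= gs_support U}.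
  move=> h /mapP [p]; rewrite mem_filter => /andP [Hp1]; rewrite mem_filter => /andP [_ HpU] ->.
  by apply: map_f; rewrite mem_filter Hp1 HpU.
have [q /and3P [HqU Hq2 Hq1]] : exists q, [&& q \in U, q.2 == g & q.1 != 0].
  case: (boolP (has (fun q => (q.2 == g) && (q.1 != 0)) U)) => [/hasP [q HqU /andP [H1 H2]]|Hnh].
    by exists q; rewrite HqU H1 H2.
  exfalso.
  have Hc0 : c = 0.
    rewrite /c big1_seq // => p /andP [Hpg HpU]; apply/eqP; apply/negPn/negP => Hn.
    by move/hasPn: Hnh => /(_ p HpU); rewrite Hpg Hn.
  have HdUM : deg_reducible n ns UM.
    apply: deg_red_ext Hd _ HsupUM => t; by rewrite Hdec Hc0 mul0r add0r.
  have Hu' : uniq (map snd UM) by apply: subseq_uniq (map_subseq snd (filter_subseq _ U)) Hu.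
  have := HMind UM Hu' HUM HdUM.
  case: (eqVneq p0.2 g) => Hpg.
  - by move/hasPn: Hnh => /(_ p0 Hp0); rewrite Hpg eqxx Hp0n.
  - move=> /(_ p0); rewrite mem_filter Hpg Hp0 => /(_ isT) Hz; by rewrite Hz eqxx in Hp0n.
have Hcq : c = q.1 by rewrite /c -(eqP Hq2); apply: sum_uniq_snd.
have Hc : c != 0 by rewrite Hcq.
have Hgs : g \in gs_support U.
  by rewrite -(eqP Hq2); apply: map_f; rewrite mem_filter Hq1 HqU.
have HU_span : spanP MD (@f_gs n U).
  case: Hd => [Hr | [U' [HU'v [Hr Hlt']]]].
  - move/red_span: Hr => Hr; apply: spanP_ext (spanP_mono (fun h H => or_intror H) Hr) _.
    by move=> t; rewrite f_gs_sub /f_gs big_nil subr0.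
  - have H1 : spanP MD (@f_gs n U').
      apply: spanP_gs => p Hp; apply: IH (HU'v p Hp).
      have := dlt_mu (Hlt' g p.2 Hgs (map_f snd Hp)); move: Hlt; lia.
    move/red_span: Hr => Hr.
    apply: spanP_ext (spanP_add (spanP_mono (fun h H => or_intror H) Hr) H1) _.
    by move=> t; rewrite f_gs_sub subrK.
have HUM_span : spanP MD (@f_gs n UM).
  by exists UM; split => // p Hp; left; exact: HUM.
apply: spanP_ext (spanP_scale c^-1 (spanP_add HU_span (spanP_scale (-1) HUM_span))) _ => t.
by rewrite Hdec mulN1r addrK mulrA mulVf // mul1r.
Qed.

Lemma collapse_eq n (U : graphsum) (t : Wpt n) :
  \sum_(h <- undup (map snd U)) (\sum_(p <- U | h == p.2) p.1) * f_hg h t = f_gs U t.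
Proof.
rewrite /f_gs.
transitivity (\sum_(h <- undup (map snd U)) \sum_(p <- U) (if h == p.2 then p.1 * f_hg p.2 t else 0)).
  apply: eq_bigr => h _; rewrite mulr_suml big_mkcond /=; apply: eq_bigr => p _.
  by case: (eqVneq h p.2) => [->|_]; rewrite ?mul0r.
rewrite exchange_big /=; apply: eq_big_seq => p Hp.
rewrite -big_mkcond /= -big_filter.
have -> : [seq h <- undup (map snd U) | h == p.2] = [:: p.2].
  apply: filter_pred1_uniq; first exact: undup_uniq.
  by rewrite mem_undup; apply: map_f Hp.
by rewrite big_seq1.
Qed.

Local Close Scope ring_scope.

Theorem mainTheorem4 (n : nat) (ns : nat -> nat) (M : hgraph -> Prop) :
  2 <= n -> maximal_set (P_deg n ns) M -> maximal_set (P_red n ns) M.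
Proof.
move=> _ Hmax; have Hmax' := Hmax; move: Hmax => [[HMv [HMi HMind]] Hmax].
have HredU : forall U, reducible n ns U -> deg_reducible n ns U.
  by move=> U Hr; left; rewrite /red_equiv /gs_sub /= cats0.
split.
  split; first by []; split.
  - by move=> g Hg Hr; exact: (HMi g Hg (HredU _ Hr)).
  - by move=> U Hu HU Hr; exact: (HMind U Hu HU (HredU _ Hr)).
move=> M' [HM'v [HM'i HM'ind]] Hsub g HM'g.
apply: NNPP => HMg.
have [G [[U [HU HG]] HG2]] := spanP_or (key Hmax' (HM'v g HM'g)).
pose V : graphsum := (1%R, g) ::
  [seq ((- (\sum_(p <- U | h == p.2) p.1))%R, h) | h <- undup (map snd U)].
have Hsnd : map snd V = g :: undup (map snd U).
  rewrite /V /=; congr (_ :: _); by elim: (undup _) => //= h s ->.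
have HgU : g \notin map snd U.
  by apply/negP => /mapP [p Hp Hpg]; apply: HMg; rewrite Hpg; exact: HU.
have Hu : uniq (map snd V) by rewrite Hsnd /= mem_undup HgU undup_uniq.
have HV : forall p, p \in V -> M' p.2.
  move=> p; rewrite inE => /orP [/eqP -> //|/mapP [h Hh ->] /=].
  rewrite mem_undup in Hh; case/mapP: Hh => q Hq ->; apply: Hsub; exact: HU.
have Hr : reducible n ns V.
  apply/red_span; apply: spanP_ext HG2 _ => t.
  rewrite HG -(collapse_eq U t) /f_gs big_cons /= mul1r big_map -sumrN.
  by congr (_ + _)%R; apply: eq_bigr => h _; rewrite mulNr.
have := HM'ind V Hu HV Hr (1%R, g) (mem_head _ _) => /= /eqP.
by rewrite oner_eq0.
Qed.
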